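(* Let $m\in\mathbb{N}^+$. There exist $C=C_N(m)>0$ and $\delta=\delta(m)>0$ such that $$\big|(u^{(m)}_p)'(r)\big|\leq\frac{C}{r^{\frac{p+1}{p-1}}}\qquad\text{for all }r\in(0,1)\text{ and all }p\in[p_S-\delta,p_S).$$
   Context: Standing setting: $N\geq3$, $B$ unit ball of $\mathbb{R}^N$ centered at $0$, $p_S=\frac{N+2}{N-2}$. $u^{(m)}_p$ is the unique radial solution of $-\Delta u=|u|^{p-1}u$ in $B$, $u=0$ on $\partial B$, with exactly $m$ nodal regions and $u^{(m)}_p(0)>0$, written as a function of $r=|x|$. *)

(* Defs.v *)
From Stdlib Require Import Reals List Sorted.
Open Scope R_scope.

Definition pS (N : nat) : R := (INR N + 2) / (INR N - 2).

(* The nonlinearity |u|^{p-1} u  (note Rpower 0 _ * 0 = 0). *)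
Definition fpow (p s : R) : R := Rpower (Rabs s) (p - 1) * s.

(* u : [0,1] -> R (as a function of r = |x|) is a classical radial solution of
   -Δu = |u|^{p-1}u in the unit ball of R^N with u = 0 on the boundary:
   u is C^1 on [0,1) with u'(0)=0, twice differentiable on (0,1) with
   u'' + (N-1)/r u' + |u|^{p-1}u = 0, and u(r) -> 0 = u(1) as r -> 1^-. *)
Definition radial_solution (N : nat) (p : R) (u : R -> R) : Prop :=
  exists u1 u2 : R -> R,
    (forall r, 0 <= r < 1 -> derivable_pt_lim u r (u1 r)) /\
    (forall r, 0 <= r < 1 -> continuity_pt u1 r) /\
    u1 0 = 0 /\
    (forall r, 0 < r < 1 -> derivable_pt_lim u1 r (u2 r)) /\
    (forall r, 0 < r < 1 ->
        u2 r + (INR N - 1) / r * u1 r + fpow p (u r) = 0) /\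
    u 1 = 0 /\
    (forall eps, 0 < eps -> exists d, 0 < d /\
        forall r, 1 - d < r < 1 -> Rabs (u r) < eps).

(* u has exactly m nodal regions: its zero set in (0,1) consists of exactly
   m-1 points 0 < r_1 < ... < r_{m-1} < 1 (the nodal regions are then the
   ball {|x|<r_1} and the annuli between consecutive zeros / the boundary). *)
Definition has_m_nodal_regions (m : nat) (u : R -> R) : Prop :=
  exists zs : list R,
    length zs = (m - 1)%nat /\
    StronglySorted Rlt zs /\
    (forall z, In z zs -> 0 < z < 1) /\
    (forall r, 0 < r < 1 -> (u r = 0 <-> In r zs)).

Definition is_u_m_p (N : nat) (p : R) (m : nat) (u : R -> R) : Prop :=
  radial_solution N p u /\ has_m_nodal_regions m u /\ 0 < u 0.

(* Main.v *)
Require Import Defs.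
From Stdlib Require Import Reals Lra List Classical Lia Sorted.
Open Scope R_scope.

Lemma dpl_ext f g x l l' : (forall y, f y = g y) -> l = l' ->
  derivable_pt_lim f x l -> derivable_pt_lim g x l'.
Proof.
  intros Hfg Hl H eps Heps. destruct (H eps Heps) as [d Hd]. exists d.
  intros h Hh Hhd. rewrite <- !Hfg, <- Hl. auto.
Qed.

Lemma cont_loc f x : continuity_pt f x -> forall eps, 0 < eps ->
  exists alp, 0 < alp /\ forall z, Rabs (z - x) < alp -> Rabs (f z - f x) < eps.
Proof.
  intros H eps He. destruct (H eps He) as [alp [Ha Hz]]. exists alp; split; [lra|].
  intros z Hz'. destruct (Req_dec z x) as [->|Hne].
  - rewrite Rminus_diag, Rabs_R0; lra.
  - apply (Hz z). split; [split; [exact I| auto] | exact Hz'].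
Qed.

Lemma dpl_cont f x l : derivable_pt_lim f x l -> continuity_pt f x.
Proof. intro H. apply derivable_continuous_pt. exists l. exact H. Qed.

Lemma Rpower_1_base y : Rpower 1 y = 1.
Proof. unfold Rpower. rewrite ln_1, Rmult_0_r, exp_0. reflexivity. Qed.

Lemma Rpower_le1 x y : 0 < x <= 1 -> 0 <= y -> Rpower x y <= 1.
Proof. intros Hx Hy. rewrite <- (Rpower_1_base y). apply Rle_Rpower_l; lra. Qed.

Lemma Rpower_pos x y : 0 < Rpower x y.
Proof. unfold Rpower. apply exp_pos. Qed.

Lemma last_zero g s t : s < t ->
  (forall x, s <= x <= t -> continuity_pt g x) -> g s < 0 -> 0 < g t ->
  exists d, s < d < t /\ g d = 0 /\ forall x, d < x <= t -> 0 < g x.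
Proof.
  intros Hst Hc Hs Ht.
  set (E := fun x => s <= x <= t /\ g x <= 0).
  assert (HB : bound E) by (exists t; intros x [Hx _]; lra).
  assert (HE : exists x, E x) by (exists s; split; lra).
  destruct (completeness E HB HE) as [d [Hub Hlub]].
  assert (Hsd : s <= d) by (apply Hub; split; lra).
  assert (Hdt : d <= t) by (apply Hlub; intros x [Hx _]; lra).
  assert (Hgt : forall x, d < x <= t -> 0 < g x).
  { intros x Hx. destruct (Rle_lt_dec (g x) 0) as [Hl|Hl]; auto.
    assert (x <= d) by (apply Hub; split; lra). lra. }
  assert (Hle : g d <= 0).
  { destruct (Rle_lt_dec (g d) 0) as [Hl|Hl]; auto. exfalso.
    destruct (cont_loc g d (Hc d ltac:(lra)) (g d) Hl) as [alp [Ha Hz]].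
    destruct (classic (exists e, E e /\ d - alp < e)) as [[e [[He1 He2] He3]]|Hno].
    - assert (e <= d) by (apply Hub; split; auto).
      specialize (Hz e ltac:(rewrite Rabs_left1; lra)).
      apply Rabs_def2 in Hz. lra.
    - assert (d <= d - alp); [|lra]. apply Hlub. intros e He.
      destruct (Rle_lt_dec e (d - alp)); auto. exfalso; apply Hno; exists e; auto. }
  assert (Hge : 0 <= g d).
  { destruct (Rle_lt_dec 0 (g d)) as [Hl|Hl]; auto. exfalso.
    assert (Hdt' : d < t) by (destruct Hdt as [H|H]; auto; subst; lra).
    destruct (cont_loc g d (Hc d ltac:(lra)) (- g d) ltac:(lra)) as [alp [Ha Hz]].
    set (x := Rmin (d + alp/2) t).
    assert (Hx1 : d < x) by (unfold x; apply Rmin_glb_lt; lra).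
    assert (Hx2 : x <= d + alp/2) by apply Rmin_l.
    assert (Hx3 : x <= t) by apply Rmin_r.
    specialize (Hz x ltac:(rewrite Rabs_right; lra)). specialize (Hgt x ltac:(lra)).
    apply Rabs_def2 in Hz. lra. }
  exists d. split; [|split; [lra|auto]].
  split.
  - destruct Hsd as [H|H]; auto. subst. lra.
  - destruct Hdt as [H|H]; auto. subst. lra.
Qed.

Definition FF (p x : R) : R := Rpower (Rabs x) (p-1) * (x*x) / (p+1).

Lemma dsq x : derivable_pt_lim (fun z => z*z) x (2*x).
Proof.
  eapply dpl_ext; [| |apply (derivable_pt_lim_mult id id x 1 1); apply derivable_pt_lim_id].
  intro; reflexivity. unfold id; ring.
Qed.

Lemma FF_deriv_nz p x s : 1 < p -> x <> 0 -> derivable_pt_lim Rabs x s -> s * x = Rabs x ->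
  derivable_pt_lim (FF p) x (fpow p x).
Proof.
  intros Hp Hx Hs Hsx.
  assert (Hax : 0 < Rabs x) by (apply Rabs_pos_lt; auto).
  pose proof (derivable_pt_lim_comp Rabs (fun z => Rpower z (p-1)) x s _ Hs
     (derivable_pt_lim_power (Rabs x) (p-1) Hax)) as D1.
  pose proof (derivable_pt_lim_mult _ _ x _ _ D1 (dsq x)) as D2.
  pose proof (derivable_pt_lim_scal _ (/(p+1)) x _ D2) as D3.
  eapply dpl_ext; [| |exact D3].
  - intro y. unfold FF, mult_real_fct, mult_fct, comp. field. lra.
  - unfold fpow, mult_real_fct, mult_fct, comp.
    assert (E : Rpower (Rabs x) (p-1) = Rpower (Rabs x) (p-1-1) * Rabs x).
    { replace (p-1) with ((p-1-1)+1) at 1 by ring. rewrite Rpower_plus, Rpower_1; auto. }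
    rewrite E. rewrite <- Hsx. field. lra.
Qed.

Lemma FF_deriv p x : 1 < p -> derivable_pt_lim (FF p) x (fpow p x).
Proof.
  intro Hp. destruct (Rtotal_order x 0) as [H|[H|H]].
  - apply (FF_deriv_nz p x (-1)); auto; [lra|apply Rabs_derive_2; auto|rewrite Rabs_left; lra].
  - subst. unfold fpow. rewrite Rmult_0_r.
    intros eps He. exists (mkposreal (Rmin 1 eps) ltac:(apply Rmin_pos; lra)).
    intros h Hh Hhd. simpl in Hhd.
    assert (H1 : Rabs h < 1) by (eapply Rlt_le_trans; [exact Hhd| apply Rmin_l]).
    assert (H2 : Rabs h < eps) by (eapply Rlt_le_trans; [exact Hhd| apply Rmin_r]).
    unfold FF. rewrite Rplus_0_l, Rmult_0_r.
    match goal with |- Rabs ?E < _ => replace E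
      with (Rpower (Rabs h) (p - 1) * h / (p + 1)) by (field; lra) end.
    assert (Hr : Rpower (Rabs h) (p-1) <= 1) by (apply Rpower_le1; [split; [apply Rabs_pos_lt; auto|lra]|lra]).
    pose proof (Rpower_pos (Rabs h) (p-1)).
    unfold Rdiv. rewrite !Rabs_mult, (Rabs_right (Rpower _ _)) by lra.
    rewrite (Rabs_right (/ (p+1))) by (left; apply Rinv_0_lt_compat; lra).
    assert (/ (p+1) <= 1) by (rewrite <- Rinv_1; apply Rinv_le_contravar; lra).
    pose proof (Rabs_pos h). pose proof (Rinv_0_lt_compat (p+1) ltac:(lra)).
    apply Rle_lt_trans with (1 * Rabs h * 1); [|lra].
    apply Rmult_le_compat; try nra.
  - apply (FF_deriv_nz p x 1); auto; [lra|apply Rabs_derive_1; auto|rewrite Rabs_right; lra].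
Qed.

Lemma FF_nonneg p x : 1 < p -> 0 <= FF p x.
Proof.
  intro. unfold FF. pose proof (Rpower_pos (Rabs x) (p-1)).
  apply Rmult_le_pos; [apply Rmult_le_pos; nra| left; apply Rinv_0_lt_compat; lra].
Qed.

Definition kk p := 2/(p-1).
Definition nn N := INR N - 2.
Definition aA N p := 2 * kk p - nn N.
Definition bb N p := kk p * (nn N - kk p).
Definition vv p (u : R -> R) r := Rpower r (kk p) * u r.
Definition yy p (u u1 : R -> R) r := Rpower r (kk p + 1) * u1 r + kk p * Rpower r (kk p) * u r.
Definition HH N p u u1 r := yy p u u1 r ^ 2 / 2 - bb N p / 2 * vv p u r ^ 2 + FF p (vv p u r).

Lemma fpow_scale p r w : 1 < p -> 0 < r ->
  fpow p (Rpower r (kk p) * w) = Rpower r (kk p) * (r*r) * fpow p w.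
Proof.
  intros Hp Hr. unfold fpow. destruct (Req_dec w 0) as [->|Hw]; [ring|].
  pose proof (Rpower_pos r (kk p)) as HP.
  rewrite Rabs_mult, (Rabs_right (Rpower _ _)) by lra.
  rewrite <- Rpower_mult_distr by (auto; apply Rabs_pos_lt; auto).
  rewrite Rpower_mult. replace (kk p * (p-1)) with 2 by (unfold kk; field; lra).
  replace 2 with (INR 2) by (simpl; ring). rewrite Rpower_pow by auto. simpl. ring.
Qed.

Lemma Rpower_k1 r k : 0 < r -> Rpower r (k+1) = Rpower r k * r.
Proof. intro. rewrite Rpower_plus, Rpower_1; auto. Qed.
Lemma Rpower_km1 r k : 0 < r -> Rpower r (k-1) = Rpower r k / r.
Proof. intro. replace k with ((k-1)+1) at 2 by ring. rewrite Rpower_k1; auto. field; lra. Qed.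

Lemma D_v p u u1 r : 0 < r -> derivable_pt_lim u r (u1 r) ->
  derivable_pt_lim (vv p u) r (yy p u u1 r / r).
Proof.
  intros Hr Du.
  pose proof (derivable_pt_lim_mult _ _ r _ _ (derivable_pt_lim_power r (kk p) Hr) Du) as D.
  eapply dpl_ext; [| |exact D]. intro; reflexivity.
  unfold yy. rewrite Rpower_km1, Rpower_k1 by auto. field. lra.
Qed.

Lemma D_y N p u u1 u2 r : 1 < p -> 0 < r -> derivable_pt_lim u r (u1 r) ->
  derivable_pt_lim u1 r (u2 r) ->
  u2 r + (INR N - 1) / r * u1 r + fpow p (u r) = 0 ->
  derivable_pt_lim (yy p u u1) r ((aA N p * yy p u u1 r + bb N p * vv p u r - fpow p (vv p u r)) / r).
Proof.
  intros Hp Hr Du Du1 Hode.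
  pose proof (derivable_pt_lim_mult _ _ r _ _ (derivable_pt_lim_power r (kk p + 1) Hr) Du1) as D1.
  pose proof (derivable_pt_lim_mult _ _ r _ _ (derivable_pt_lim_power r (kk p) Hr) Du) as D2.
  pose proof (derivable_pt_lim_scal _ (kk p) r _ D2) as D3.
  pose proof (derivable_pt_lim_plus _ _ r _ _ D1 D3) as D.
  eapply dpl_ext; [| |exact D].
  - intro. unfold yy, mult_real_fct, mult_fct, plus_fct. ring.
  - unfold vv. rewrite fpow_scale by auto.
    replace (u2 r) with (- ((INR N - 1) / r * u1 r + fpow p (u r))) by lra.
    unfold yy, aA, bb, nn, mult_real_fct, mult_fct.
    replace (kk p + 1 - 1) with (kk p) by ring.
    rewrite Rpower_km1, Rpower_k1 by auto. field. lra.
Qed.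

Lemma D_H N p u u1 u2 r : 1 < p -> 0 < r -> derivable_pt_lim u r (u1 r) ->
  derivable_pt_lim u1 r (u2 r) ->
  u2 r + (INR N - 1) / r * u1 r + fpow p (u r) = 0 ->
  derivable_pt_lim (HH N p u u1) r (aA N p * yy p u u1 r ^ 2 / r).
Proof.
  intros Hp Hr Du Du1 Hode.
  pose proof (D_y N p u u1 u2 r Hp Hr Du Du1 Hode) as Dy.
  pose proof (D_v p u u1 r Hr Du) as Dv.
  pose proof (derivable_pt_lim_comp _ _ r _ _ Dy (dsq (yy p u u1 r))) as Dy2.
  pose proof (derivable_pt_lim_comp _ _ r _ _ Dv (dsq (vv p u r))) as Dv2.
  pose proof (derivable_pt_lim_comp _ _ r _ _ Dv (FF_deriv p (vv p u r) Hp)) as DF.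
  pose proof (derivable_pt_lim_scal _ (/2) r _ Dy2) as E1.
  pose proof (derivable_pt_lim_scal _ (bb N p / 2) r _ Dv2) as E2.
  pose proof (derivable_pt_lim_plus _ _ r _ _ (derivable_pt_lim_minus _ _ r _ _ E1 E2) DF) as D.
  eapply dpl_ext; [| |exact D].
  - intro. unfold HH, comp, mult_real_fct, minus_fct, plus_fct. field.
  - field. lra.
Qed.

Lemma nonincr g g' a b : a <= b -> (forall c, a <= c <= b -> derivable_pt_lim g c (g' c)) ->
  (forall c, a < c < b -> g' c <= 0) -> g b <= g a.
Proof.
  intros Hab Hd Hn. destruct Hab as [Hab|Hab]; [|subst; lra].
  destruct (MVT_cor2 g g' a b Hab Hd) as [c [E Hc]].
  specialize (Hn c Hc). nra.
Qed.

Definition Good N p (u u1 u2 : R -> R) : Prop :=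
  1 < p /\ 0 <= aA N p /\ 0 < bb N p /\
  (forall r, 0 < r < 1 -> derivable_pt_lim u r (u1 r)) /\
  (forall r, 0 < r < 1 -> derivable_pt_lim u1 r (u2 r)) /\
  (forall r, 0 < r < 1 -> u2 r + (INR N - 1) / r * u1 r + fpow p (u r) = 0).

Lemma H_mono N p u u1 u2 r1 r2 : Good N p u u1 u2 -> 0 < r1 <= r2 -> r2 < 1 ->
  HH N p u u1 r1 <= HH N p u u1 r2.
Proof.
  intros [Hp [Ha [Hb [Du [Du1 Hode]]]]] H1 H2.
  assert (Hn := nonincr (fun r => - HH N p u u1 r) (fun r => - (aA N p * yy p u u1 r ^ 2 / r)) r1 r2
    ltac:(lra)).
  assert (- HH N p u u1 r2 <= - HH N p u u1 r1); [|lra].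
  apply Hn.
  - intros c Hc. apply derivable_pt_lim_opp with (f := HH N p u u1).
    apply (D_H N p u u1 u2 c Hp ltac:(lra)); auto; [apply Du|apply Du1|apply Hode]; lra.
  - intros c Hc. assert (0 <= aA N p * yy p u u1 c ^ 2 / c); [|lra].
    apply Rmult_le_pos; [apply Rmult_le_pos; [auto| apply pow2_ge_0]|left; apply Rinv_0_lt_compat; lra].
Qed.

Lemma H_small N p u u1 u2 r0 : Good N p u u1 u2 -> 0 < r0 ->
  continuity_pt u 0 -> continuity_pt u1 0 -> u1 0 = 0 ->
  forall eps, 0 < eps -> exists al, 0 < al < r0 /\ Rabs (HH N p u u1 al) <= eps.
Proof.
  intros HG Hr0 Cu Cu1 Hu10 eps He.
  destruct HG as [Hp [Ha [Hb _]]].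
  assert (Hk : 0 < kk p) by (unfold kk; apply Rdiv_lt_0_compat; lra).
  destruct (cont_loc u 0 Cu 1 ltac:(lra)) as [a1 [Ha1 Hu]].
  destruct (cont_loc u1 0 Cu1 1 ltac:(lra)) as [a2 [Ha2 Hu1]].
  set (U := Rabs (u 0) + 1).
  set (K := (1 + kk p * U)^2/2 + U^2 + bb N p * U^2/2).
  assert (HU : 0 < U) by (unfold U; pose proof (Rabs_pos (u 0)); lra).
  assert (HK : 0 <= K) by (unfold K; nra).
  set (rho := Rmin 1 (Rmin (/(U+1)) (eps/(K+1)))).
  assert (Hrho : 0 < rho) by (unfold rho; repeat apply Rmin_pos; try lra;
     [apply Rinv_0_lt_compat; lra| apply Rdiv_lt_0_compat; lra]).
  assert (Hr1 : rho <= 1) by apply Rmin_l.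
  assert (Hr2 : rho <= /(U+1)) by (eapply Rle_trans; [apply Rmin_r|apply Rmin_l]).
  assert (Hr3 : rho <= eps/(K+1)) by (eapply Rle_trans; [apply Rmin_r|apply Rmin_r]).
  set (al := Rmin (Rmin (a1/2) (a2/2)) (Rmin (r0/2) (Rmin (1/2) (Rpower rho (/ kk p))))).
  assert (Hal : 0 < al) by (unfold al; repeat apply Rmin_pos; try lra; apply Rpower_pos).
  assert (Hal1 : al <= a1/2) by (unfold al; eapply Rle_trans; [apply Rmin_l|apply Rmin_l]).
  assert (Hal2 : al <= a2/2) by (unfold al; eapply Rle_trans; [apply Rmin_l|apply Rmin_r]).
  assert (Hal3 : al <= r0/2) by (unfold al; eapply Rle_trans; [apply Rmin_r|apply Rmin_l]).
  assert (Hal4 : al <= 1/2) by (unfold al; eapply Rle_trans; [apply Rmin_r|];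
     eapply Rle_trans; [apply Rmin_r|apply Rmin_l]).
  assert (Hal5 : al <= Rpower rho (/ kk p)) by (unfold al; eapply Rle_trans; [apply Rmin_r|];
     eapply Rle_trans; [apply Rmin_r|apply Rmin_r]).
  exists al. split; [lra|].
  set (P := Rpower al (kk p)).
  assert (HP : P <= rho).
  { unfold P. apply Rle_trans with (Rpower (Rpower rho (/ kk p)) (kk p)).
    apply Rle_Rpower_l; lra. rewrite Rpower_mult, Rinv_l, Rpower_1; lra. }
  assert (HP0 : 0 < P) by apply Rpower_pos.
  assert (Hua : Rabs (u al) <= U).
  { specialize (Hu al ltac:(rewrite Rminus_0_r, Rabs_right; lra)).
    pose proof (Rabs_triang_inv (u al) (u 0)). unfold U; lra. }
  assert (Hu1a : Rabs (u1 al) <= 1).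
  { specialize (Hu1 al ltac:(rewrite Rminus_0_r, Rabs_right; lra)).
    rewrite Hu10, Rminus_0_r in Hu1. lra. }
  assert (Hv : Rabs (vv p u al) <= P * U).
  { unfold vv. fold P. rewrite Rabs_mult, (Rabs_right P) by lra. apply Rmult_le_compat_l; lra. }
  assert (Hy : Rabs (yy p u u1 al) <= P * (1 + kk p * U)).
  { unfold yy. rewrite Rpower_k1 by lra. fold P.
    eapply Rle_trans; [apply Rabs_triang|]. rewrite !Rabs_mult, !Rabs_right by lra.
    pose proof (Rabs_pos (u1 al)). pose proof (Rabs_pos (u al)).
    assert (P * al * Rabs (u1 al) <= P) by (apply Rle_trans with (P * 1 * 1); [apply Rmult_le_compat; nra|lra]).
    assert (kk p * P * Rabs (u al) <= P * (kk p * U)) by (replace (P*(kk p*U)) with (kk p * P * U) by ring; apply Rmult_le_compat_l; [nra|lra]). rewrite (Rabs_right (kk p)) by lra; lra. }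
  assert (HPU : P * U <= 1).
  { apply Rle_trans with (/(U+1) * U). apply Rmult_le_compat_r; lra.
    apply Rmult_le_reg_l with (U+1); [lra|]. rewrite <- Rmult_assoc, Rinv_r by lra. lra. }
  assert (HF : FF p (vv p u al) <= (vv p u al)^2).
  { unfold FF. set (w := vv p u al). assert (Hw1 : Rabs w <= 1) by (unfold w; lra).
    destruct (Req_dec w 0) as [Hw|Hw].
    - rewrite Hw. replace (Rpower (Rabs 0) (p - 1) * (0 * 0) / (p + 1)) with 0 by (field; lra). lra.
    - assert (Rpower (Rabs w) (p-1) <= 1) by (apply Rpower_le1; [split; [apply Rabs_pos_lt; auto|lra]|lra]).
      pose proof (Rpower_pos (Rabs w) (p-1)).
      assert (0 <= w*w) by nra.
      apply Rle_trans with (1 * (w*w) / (p+1)).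
      + unfold Rdiv. apply Rmult_le_compat_r; [left; apply Rinv_0_lt_compat; lra|]. nra.
      + apply Rle_trans with (w*w/2); [|nra]. unfold Rdiv. apply Rmult_le_compat; try nra.
        left; apply Rinv_0_lt_compat; lra. apply Rinv_le_contravar; lra. }
  pose proof (FF_nonneg p (vv p u al) Hp) as HF0.
  assert (Hv2 : vv p u al ^ 2 <= (P*U)^2) by (rewrite <- !Rsqr_pow2; apply Rsqr_le_abs_1; rewrite (Rabs_right (P*U)) by nra; auto).
  assert (Hy2 : yy p u u1 al ^ 2 <= (P*(1 + kk p * U))^2) by (rewrite <- !Rsqr_pow2; apply Rsqr_le_abs_1; rewrite (Rabs_right (P*_)); [auto|]; apply Rle_ge, Rmult_le_pos; [lra|]; pose proof (Rmult_le_pos (kk p) U); lra).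
  assert (HPK : P^2 * K <= eps).
  { apply Rle_trans with (rho * K). 
    - assert (P^2 <= rho) by nra. nra.
    - apply Rle_trans with (eps/(K+1)*K). nra.
      apply Rmult_le_reg_l with (K+1); [lra|]. unfold Rdiv. field_simplify; nra. }
  unfold HH. apply Rabs_le. unfold K in HPK. split; nra.
Qed.


Lemma H_nonneg N p u u1 u2 r : Good N p u u1 u2 -> 0 < r < 1 ->
  continuity_pt u 0 -> continuity_pt u1 0 -> u1 0 = 0 -> 0 <= HH N p u u1 r.
Proof.
  intros HG Hr Cu Cu1 H0.
  apply Rle_plus_epsilon. intros eps He.
  destruct (H_small N p u u1 u2 r HG ltac:(lra) Cu Cu1 H0 eps He) as [al [Hal Hh]].
  pose proof (H_mono N p u u1 u2 al r HG ltac:(lra) ltac:(lra)).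
  pose proof (Rle_abs (- HH N p u u1 al)). rewrite Rabs_Ropp in H1. lra.
Qed.

Lemma neg_right g d l t : d < t -> derivable_pt_lim g d l -> l < 0 -> g d = 0 ->
  exists x, d < x <= t /\ g x < 0.
Proof.
  intros Hdt Hd Hl H0. destruct (Hd (-l/2) ltac:(lra)) as [del Hdel].
  set (h := Rmin (del/2) (t-d)).
  assert (Hh : 0 < h) by (unfold h; apply Rmin_pos; [pose proof (cond_pos del)|]; lra).
  assert (Hh1 : h <= del/2) by apply Rmin_l. assert (Hh2 : h <= t-d) by apply Rmin_r.
  pose proof (cond_pos del).
  specialize (Hdel h ltac:(lra) ltac:(rewrite Rabs_right; lra)).
  rewrite H0 in Hdel. apply Rabs_def2 in Hdel.
  exists (d+h). split; [lra|].
  assert (Hq : (g (d+h) - 0)/h < l/2) by lra.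
  apply Rmult_lt_compat_r with (r := h) in Hq; [|lra].
  replace ((g (d+h) - 0)/h * h) with (g (d+h)) in Hq by (field; lra). nra.
Qed.

Lemma sigma_sq s x : (s = 1 \/ s = -1) -> (s * x)^2 = x^2.
Proof. intros [->| ->]; ring. Qed.
Lemma sigma_abs s x : (s = 1 \/ s = -1) -> Rabs (s * x) = Rabs x.
Proof. intros [->| ->]; [rewrite Rmult_1_l|]; auto. replace (-1*x) with (-x) by ring. apply Rabs_Ropp. Qed.

Lemma no_up_after_down N p u u1 u2 al be s : Good N p u u1 u2 ->
  (forall r, 0 < r < 1 -> 0 <= HH N p u u1 r) ->
  0 < al -> be < 1 -> (s = 1 \/ s = -1) ->
  (forall x, al < x < be -> 0 < s * vv p u x) ->
  forall a b, al < a < b -> b < be -> s * yy p u u1 a < 0 -> s * yy p u u1 b <= 0.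
Proof.
  intros HG Hpos Hal Hbe Hs Hsv a b Hab Hb Ha.
  destruct (Rle_lt_dec (s * yy p u u1 b) 0) as [|Hc]; auto. exfalso.
  pose proof HG as [Hp [HA [HB [Du [Du1 Hode]]]]].
  assert (Dg : forall x, al < x < be -> derivable_pt_lim (fun z => s * yy p u u1 z) x
     (s * ((aA N p * yy p u u1 x + bb N p * vv p u x - fpow p (vv p u x)) / x))).
  { intros x Hx. apply derivable_pt_lim_scal with (f := yy p u u1).
    apply (D_y N p u u1 u2 x Hp ltac:(lra)); [apply Du|apply Du1|apply Hode]; lra. }
  destruct (last_zero (fun z => s * yy p u u1 z) a b ltac:(lra)) as [d [Hd [Hgd Hgt]]]; auto.
  { intros x Hx. eapply dpl_cont. apply Dg. lra. }
  destruct (neg_right (fun z => s * yy p u u1 z) d _ b ltac:(lra) (Dg d ltac:(lra))) as [x [Hx Hgx]].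
  - assert (Hy0 : yy p u u1 d = 0) by (destruct Hs as [-> | ->]; lra).
    rewrite Hy0.
    set (w := vv p u d). assert (Hw : 0 < s * w) by (apply Hsv; lra).
    assert (Hwa : Rabs w = s * w) by (rewrite <- (sigma_abs s w Hs); apply Rabs_right; lra).
    assert (Hw0 : 0 < Rabs w) by lra.
    pose proof (Hpos d ltac:(lra)) as Hd0. unfold HH in Hd0. fold w in Hd0. rewrite Hy0 in Hd0.
    unfold FF in Hd0. unfold fpow.
    set (R0 := Rpower (Rabs w) (p-1)) in *.
    assert (Hww : 0 < w*w) by (rewrite <- (sigma_sq s w Hs) in *; nra).
    assert (HR : bb N p * (p+1) / 2 <= R0).
    { assert (0 <= (R0 * (w*w) / (p+1) - bb N p / 2 * (w * w)) * (2*(p+1))) by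
        (apply Rmult_le_pos; [simpl in Hd0; nra|lra]).
      assert (Heq : (R0 * (w*w) / (p+1) - bb N p / 2 * (w * w)) * (2*(p+1)) = (w*w) * (2 * R0 - bb N p * (p+1))) by (field; lra).
      rewrite Heq in H. assert (0 <= 2 * R0 - bb N p * (p+1)) by (apply (Rmult_le_reg_l (w*w)); nra). lra. }
    replace (s * ((aA N p * 0 + bb N p * w - R0 * w) / d)) with ((bb N p - R0) * (s * w) / d) by (field; lra).
    unfold Rdiv. apply Rmult_neg_pos; [|apply Rinv_0_lt_compat; lra].
    apply Rmult_neg_pos; nra.
  - destruct Hs as [-> | ->]; lra.
  - specialize (Hgt x Hx). lra.
Qed.

Lemma piece N p u u1 u2 al be s Wb Vb : Good N p u u1 u2 ->
  (forall r, 0 < r < 1 -> 0 <= HH N p u u1 r) ->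
  0 < al -> al < be -> be < 1 -> (s = 1 \/ s = -1) ->
  (forall x, al < x < be -> 0 < s * vv p u x) ->
  (forall x, al <= x <= be -> Rabs (yy p u u1 x) <= Wb /\ Rabs (vv p u x) <= Vb) ->
  HH N p u u1 be - HH N p u u1 al <= 4 * aA N p * Wb * Vb.
Proof.
  intros HG Hpos Hal Hab Hbe Hs Hsv Hbd.
  pose proof (no_up_after_down N p u u1 u2 al be s HG Hpos Hal Hbe Hs Hsv) as ND.
  pose proof HG as [Hp [HA [HB [Du [Du1 Hode]]]]].
  set (y := yy p u u1). set (v := vv p u). set (H := HH N p u u1).
  set (E := fun x => al <= x <= be /\ forall w, al < w < x -> 0 <= s * y w).
  assert (HEb : bound E) by (exists be; intros x [Hx _]; lra).
  assert (HEn : exists x, E x) by (exists al; split; [lra| intros; lra]).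
  destruct (completeness E HEb HEn) as [c [Hub Hlub]].
  assert (Hac : al <= c) by (apply Hub; split; [lra| intros; lra]).
  assert (Hcb : c <= be) by (apply Hlub; intros x [Hx _]; lra).
  assert (Hleft : forall w, al < w < c -> 0 <= s * y w).
  { intros w Hw. destruct (classic (exists x, E x /\ w < x)) as [[x [[_ Hx] Hwx]]|Hno].
    - apply Hx; lra.
    - assert (c <= w); [|lra]. apply Hlub. intros x Hx.
      destruct (Rle_lt_dec x w); auto. exfalso; apply Hno; exists x; auto. }
  assert (Hright : forall w, c < w < be -> s * y w <= 0).
  { intros w Hw. destruct (Rle_lt_dec (s * y w) 0) as [|Hc]; auto. exfalso.
    assert (E w); [|assert (w <= c) by (apply Hub; auto); lra].
    split; [lra|]. intros w' Hw'. destruct (Rle_lt_dec 0 (s * y w')) as [|Hn]; auto.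
    exfalso. pose proof (ND w' w ltac:(lra) ltac:(lra) Hn) as Z. fold y in Z. lra. }
  assert (Dall : forall x, al <= x <= be -> derivable_pt_lim H x (aA N p * y x ^ 2 / x)).
  { intros x Hx. apply (D_H N p u u1 u2 x Hp ltac:(lra)); [apply Du|apply Du1|apply Hode]; lra. }
  assert (Dv : forall x, al <= x <= be -> derivable_pt_lim v x (y x / x)).
  { intros x Hx. apply D_v; [lra|apply Du; lra]. }
  set (K := aA N p * Wb).
  assert (HK : forall x, al <= x <= be -> s * y x <= Wb /\ - Wb <= s * y x).
  { intros x Hx. destruct (Hbd x Hx) as [Hy _]. pose proof (Rle_abs (s * y x)) as H0.
    pose proof (Rle_abs (- (s * y x))) as H1. rewrite Rabs_Ropp in H1.
    rewrite (sigma_abs s (y x) Hs) in H0, H1. fold y in Hy. lra. }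
  assert (G1 : H c - s * K * v c <= H al - s * K * v al).
  { apply (nonincr (fun x => H x - s * K * v x) (fun x => aA N p * y x ^ 2 / x - s * K * (y x / x)));
      [lra| |].
    - intros x Hx. apply derivable_pt_lim_minus with (f1 := H) (f2 := fun z => s * K * v z).
      apply Dall; lra. apply derivable_pt_lim_scal with (f := v). apply Dv; lra.
    - intros x Hx. specialize (Hleft x Hx). destruct (HK x ltac:(lra)).
      unfold K. replace (aA N p * y x ^ 2 / x - s * (aA N p * Wb) * (y x / x)) with
        (- (aA N p * ((s * y x) * (Wb - s * y x))) * / x).
      + assert (0 <= aA N p * ((s * y x) * (Wb - s * y x))) by (apply Rmult_le_pos; nra).
        assert (0 < / x) by (apply Rinv_0_lt_compat; lra). nra.
      + rewrite <- (sigma_sq s (y x) Hs). field. lra. }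
  assert (G2 : H be + s * K * v be <= H c + s * K * v c).
  { apply (nonincr (fun x => H x + s * K * v x) (fun x => aA N p * y x ^ 2 / x + s * K * (y x / x)));
      [lra| |].
    - intros x Hx. apply derivable_pt_lim_plus with (f1 := H) (f2 := fun z => s * K * v z).
      apply Dall; lra. apply derivable_pt_lim_scal with (f := v). apply Dv; lra.
    - intros x Hx. specialize (Hright x Hx). destruct (HK x ltac:(lra)).
      unfold K. replace (aA N p * y x ^ 2 / x + s * (aA N p * Wb) * (y x / x)) with
        (- (aA N p * ((- (s * y x)) * (Wb + s * y x))) * / x).
      + assert (0 <= aA N p * ((- (s * y x)) * (Wb + s * y x))) by (apply Rmult_le_pos; nra).
        assert (0 < / x) by (apply Rinv_0_lt_compat; lra). nra.
      + rewrite <- (sigma_sq s (y x) Hs). field. lra. }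
  assert (Hvb : forall x, al <= x <= be -> Rabs (s * v x) <= Vb).
  { intros x Hx. rewrite sigma_abs by auto. apply Hbd; auto. }
  pose proof (Hvb al ltac:(lra)). pose proof (Hvb be ltac:(lra)). pose proof (Hvb c ltac:(lra)).
  pose proof (Rle_abs (s * v al)). pose proof (Rle_abs (s * v be)). pose proof (Rle_abs (s * v c)).
  pose proof (Rle_abs (- (s * v al))). pose proof (Rle_abs (- (s * v be))). pose proof (Rle_abs (- (s * v c))).
  rewrite !Rabs_Ropp in *.
  assert (HWb : 0 <= Wb) by (destruct (Hbd al ltac:(lra)) as [Hy _]; pose proof (Rabs_pos (yy p u u1 al)); lra).
  assert (HK0 : 0 <= K) by (unfold K; apply Rmult_le_pos; auto).
  assert (E1 : H c - H al <= K * (2 * Vb)).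
  { apply Rle_trans with (K * (s * v c - s * v al)); [nra|]. apply Rmult_le_compat_l; lra. }
  assert (E2 : H be - H c <= K * (2 * Vb)).
  { apply Rle_trans with (K * (s * v c - s * v be)); [nra|]. apply Rmult_le_compat_l; lra. }
  unfold K in *. fold H. lra.
Qed.

Definition ltb_ x z := if Rlt_dec x z then true else false.

Lemma ltb_spec x z : (ltb_ x z = true -> x < z) /\ (ltb_ x z = false -> ~ x < z).
Proof. unfold ltb_; destruct Rlt_dec; split; intros; try discriminate; auto. Qed.

Lemma filt_len z l : (length (filter (fun x => ltb_ x z) l) + length (filter (fun x => ltb_ z x) l) <= length l
  /\ (In z l -> length (filter (fun x => ltb_ x z) l) + length (filter (fun x => ltb_ z x) l) + 1 <= length l))%nat.
Proof.
  induction l as [|a l [IH1 IH2]]; simpl; [split; [lia| tauto]|].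
  destruct (ltb_spec a z) as [A1 A2]. destruct (ltb_spec z a) as [B1 B2].
  destruct (ltb_ a z); destruct (ltb_ z a); simpl.
  - exfalso. specialize (A1 eq_refl). specialize (B1 eq_refl). lra.
  - split; [lia|]. intros [->|H]; [specialize (A1 eq_refl); lra|]. specialize (IH2 H). lia.
  - split; [lia|]. intros [->|H]; [specialize (B1 eq_refl); lra|]. specialize (IH2 H). lia.
  - split; [lia|]. intros [->|H]; [lia|]. specialize (IH2 H). lia.
Qed.

Lemma filt_in z l x : In x l -> (x < z -> In x (filter (fun x => ltb_ x z) l)) /\ (z < x -> In x (filter (fun x => ltb_ z x) l)).
Proof.
  intro H. split; intro Hx; apply filter_In; split; auto; unfold ltb_; destruct Rlt_dec; auto; lra.
Qed.

Lemma sign_const g al be : (forall x, al < x < be -> continuity_pt g x) ->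
  (forall x, al < x < be -> g x <> 0) ->
  exists s, (s = 1 \/ s = -1) /\ forall x, al < x < be -> 0 < s * g x.
Proof.
  intros Hc Hn.
  destruct (classic (forall x, al < x < be -> 0 < g x)) as [Hp|Hp].
  - exists 1. split; auto. intros. rewrite Rmult_1_l. auto.
  - exists (-1). split; auto. intros x Hx.
    destruct (Rlt_dec (g x) 0) as [Hl|Hl]; [lra|].
    assert (Hgx : 0 < g x) by (specialize (Hn x Hx); lra). exfalso.
    apply Hp. intros x' Hx'. destruct (Rlt_dec 0 (g x')) as [Hl'|Hl']; auto. exfalso.
    assert (Hgx' : g x' < 0) by (specialize (Hn x' Hx'); lra).
    destruct (Rtotal_order x' x) as [H|[H|H]]; [|subst; lra|].
    + destruct (last_zero g x' x H) as [d [Hd [Hgd _]]]; auto.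
      intros; apply Hc; lra. apply (Hn d); auto; lra.
    + destruct (last_zero (fun z => - g z) x x' H) as [d [Hd [Hgd _]]]; try lra.
      intros z Hz. apply continuity_pt_opp with (f := g). apply Hc; lra.
      apply (Hn d); [lra|]. lra.
Qed.

Lemma piece0 N p u u1 u2 al be Wb Vb : Good N p u u1 u2 ->
  (forall r, 0 < r < 1 -> 0 <= HH N p u u1 r) ->
  0 < al -> al < be -> be < 1 ->
  (forall x, al < x < be -> u x <> 0) ->
  (forall x, al <= x <= be -> Rabs (yy p u u1 x) <= Wb /\ Rabs (vv p u x) <= Vb) ->
  HH N p u u1 be - HH N p u u1 al <= 4 * aA N p * Wb * Vb.
Proof.
  intros HG Hpos Hal Hab Hbe Hn Hbd.
  pose proof HG as [Hp [HA [HB [Du [Du1 Hode]]]]].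
  destruct (sign_const u al be) as [s [Hs Hsu]]; auto.
  { intros x Hx. eapply dpl_cont. apply Du. lra. }
  apply (piece N p u u1 u2 al be s Wb Vb); auto.
  intros x Hx. unfold vv. pose proof (Rpower_pos x (kk p)). specialize (Hsu x Hx).
  replace (s * (Rpower x (kk p) * u x)) with (Rpower x (kk p) * (s * u x)) by ring. nra.
Qed.

Lemma chain N p u u1 u2 Wb Vb r0 : Good N p u u1 u2 ->
  (forall r, 0 < r < 1 -> 0 <= HH N p u u1 r) -> r0 < 1 ->
  (forall x, 0 < x <= r0 -> Rabs (yy p u u1 x) <= Wb /\ Rabs (vv p u x) <= Vb) ->
  forall n l, (length l <= n)%nat -> forall al be, 0 < al -> al < be -> be <= r0 ->
  (forall x, al < x < be -> u x = 0 -> In x l) ->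
  HH N p u u1 be - HH N p u u1 al <= 4 * aA N p * Wb * Vb * INR (length l + 1).
Proof.
  intros HG Hpos Hr0 Hbd.
  pose proof HG as [Hp [HA [HB [Du [Du1 Hode]]]]].
  assert (HK : forall al, 0 < al <= r0 -> 0 <= 4 * aA N p * Wb * Vb).
  { intros al Hal. destruct (Hbd al Hal). pose proof (Rabs_pos (yy p u u1 al)).
    pose proof (Rabs_pos (vv p u al)).
    apply Rmult_le_pos; [apply Rmult_le_pos; [apply Rmult_le_pos|]|]; lra. }
  induction n as [|n IH]; intros l Hl al be Hal Hab Hbe Hz.
  - destruct (classic (exists z, al < z < be /\ u z = 0)) as [[z [Hz1 Hz2]]|Hno].
    + specialize (Hz z Hz1 Hz2). destruct l; [destruct Hz|simpl in Hl; lia].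
    + apply Rle_trans with (4 * aA N p * Wb * Vb * 1).
      * rewrite Rmult_1_r. apply (piece0 N p u u1 u2); auto; try lra.
        intros x Hx Hu. apply Hno. exists x; auto. intros x Hx; apply Hbd; lra.
      * apply Rmult_le_compat_l; [apply (HK al); lra|].
        rewrite plus_INR. simpl. pose proof (pos_INR (length l)). lra.
  - destruct (classic (exists z, al < z < be /\ u z = 0)) as [[z [Hz1 Hz2]]|Hno].
    + pose proof (Hz z Hz1 Hz2) as Hzl.
      set (l1 := filter (fun x => ltb_ x z) l). set (l2 := filter (fun x => ltb_ z x) l).
      destruct (filt_len z l) as [_ Hlen]. specialize (Hlen Hzl). fold l1 l2 in Hlen.
      assert (E1 := IH l1 ltac:(lia) al z Hal ltac:(lra) ltac:(lra)).
      assert (E2 := IH l2 ltac:(lia) z be ltac:(lra) ltac:(lra) Hbe).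
      assert (Hx1 : forall x, al < x < z -> u x = 0 -> In x l1).
      { intros x Hx Hu. apply (filt_in z l x (Hz x ltac:(lra) Hu)). lra. }
      assert (Hx2 : forall x, z < x < be -> u x = 0 -> In x l2).
      { intros x Hx Hu. apply (filt_in z l x (Hz x ltac:(lra) Hu)). lra. }
      specialize (E1 Hx1). specialize (E2 Hx2).
      assert (HL : INR (length l1 + 1) + INR (length l2 + 1) <= INR (length l + 1)).
      { rewrite <- plus_INR. apply le_INR. lia. }
      pose proof (HK al ltac:(lra)). nra.
    + apply Rle_trans with (4 * aA N p * Wb * Vb * 1).
      * rewrite Rmult_1_r. apply (piece0 N p u u1 u2); auto; try lra.
        intros x Hx Hu. apply Hno. exists x; auto. intros x Hx; apply Hbd; lra.
      * apply Rmult_le_compat_l; [apply (HK al); lra|].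
        rewrite plus_INR. simpl. pose proof (pos_INR (length l)). lra.
Qed.

Lemma v_bound N p w yv S T : 1 < p -> 0 < bb N p -> 1 <= T -> 0 <= S ->
  (p+1) * bb N p <= Rpower T (p-1) ->
  yv ^ 2 / 2 - bb N p / 2 * w ^ 2 + FF p w <= S ->
  w ^ 2 <= 2 * S / bb N p + T ^ 2.
Proof.
  intros Hp Hb HT HS0 HTp HS.
  assert (HSb : 0 <= 2 * S / bb N p) by (unfold Rdiv; apply Rmult_le_pos; [lra|left; apply Rinv_0_lt_compat; lra]).
  destruct (Rle_lt_dec (Rabs w) T) as [Hw|Hw].
  - assert (w^2 <= T^2) by (rewrite <- !Rsqr_pow2; apply Rsqr_le_abs_1; rewrite (Rabs_right T); lra).
    lra.
  - assert (HR : Rpower T (p-1) <= Rpower (Rabs w) (p-1)) by (apply Rle_Rpower_l; lra).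
    assert (HF : bb N p * w^2 <= FF p w).
    { unfold FF. apply Rmult_le_reg_l with (p+1); [lra|].
      replace ((p+1) * (Rpower (Rabs w) (p - 1) * (w * w) / (p + 1))) with (Rpower (Rabs w) (p - 1) * (w*w)) by (field; lra).
      assert (0 <= w*w) by nra. simpl. nra. }
    assert (0 <= yv^2) by apply pow2_ge_0.
    assert (w^2 <= 2 * S / bb N p); [|pose proof (pow2_ge_0 T); lra].
    apply Rmult_le_reg_l with (bb N p); [lra|]. unfold Rdiv.
    replace (bb N p * (2 * S * / bb N p)) with (2*S) by (field; lra). lra.
Qed.

Lemma abs_le_sqrt x Y : x^2 <= Y -> Rabs x <= sqrt Y.
Proof.
  intro H. rewrite <- sqrt_Rsqr_abs. apply sqrt_le_1_alt. rewrite Rsqr_pow2. auto.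
Qed.

Lemma S_bound N p u u1 u2 m zs T r0 : Good N p u u1 u2 ->
  continuity_pt u 0 -> continuity_pt u1 0 -> u1 0 = 0 -> 0 < r0 < 1 -> 1 <= T ->
  (p+1) * bb N p <= Rpower T (p-1) ->
  length zs = (m-1)%nat -> (1 <= m)%nat -> (forall r, 0 < r < 1 -> u r = 0 -> In r zs) ->
  2 * aA N p * INR m * (2 + 2*((bb N p + 1)/bb N p)) <= 1/2 ->
  HH N p u u1 r0 <= 4 * aA N p * INR m * (bb N p + 1) * T^2.
Proof.
  intros HG Cu Cu1 H0 Hr0 HT HTp Hlen Hm Hzs Hsmall.
  pose proof HG as [Hp [HA [HB [Du [Du1 Hode]]]]].
  assert (Hpos : forall r, 0 < r < 1 -> 0 <= HH N p u u1 r) by (intros; eapply H_nonneg; eauto).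
  set (S := HH N p u u1 r0). set (b := bb N p). set (A := aA N p).
  assert (HS0 : 0 <= S) by (apply Hpos; auto).
  set (V2 := 2 * S / b + T^2).
  assert (HV2 : 0 <= V2) by (unfold V2; pose proof (pow2_ge_0 T); unfold Rdiv;
     assert (0 <= 2 * S * / b) by (apply Rmult_le_pos; [lra|left; apply Rinv_0_lt_compat; unfold b; lra]); lra).
  set (Y2 := 2 * S + b * V2).
  assert (HY2 : 0 <= Y2) by (unfold Y2; assert (0 <= b*V2) by (apply Rmult_le_pos; unfold b; lra); lra).
  assert (Hbd : forall x, 0 < x <= r0 -> Rabs (yy p u u1 x) <= sqrt Y2 /\ Rabs (vv p u x) <= sqrt V2).
  { intros x Hx. pose proof (H_mono N p u u1 u2 x r0 HG ltac:(lra) ltac:(lra)) as Hm0. fold S in Hm0.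
    unfold HH in Hm0.
    assert (Hv : vv p u x ^ 2 <= V2) by (eapply v_bound; eauto).
    pose proof (FF_nonneg p (vv p u x) Hp).
    split; apply abs_le_sqrt; auto.
    unfold Y2. fold b in Hm0. assert (b * vv p u x ^ 2 <= b * V2) by (apply Rmult_le_compat_l; unfold b; lra).
    lra. }
  assert (HWV : sqrt Y2 * sqrt V2 <= (Y2 + V2)/2).
  { pose proof (sqrt_sqrt Y2 HY2). pose proof (sqrt_sqrt V2 HV2).
    pose proof (pow2_ge_0 (sqrt Y2 - sqrt V2)). nra. }
  apply Rle_plus_epsilon. intros eps He.
  destruct (H_small N p u u1 u2 r0 HG ltac:(lra) Cu Cu1 H0 (eps/2) ltac:(lra)) as [al [Hal Hh]].
  pose proof (chain N p u u1 u2 (sqrt Y2) (sqrt V2) r0 HG Hpos ltac:(lra) Hbd (length zs) zs (le_n _)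
     al r0 ltac:(lra) ltac:(lra) ltac:(lra) ltac:(intros; apply Hzs; [lra|auto])) as Hc.
  replace (length zs + 1)%nat with m in Hc by lia. fold S A in Hc.
  pose proof (Rle_abs (HH N p u u1 al)).
  assert (HAm : 0 <= A * INR m) by (apply Rmult_le_pos; [unfold A; lra|apply pos_INR]).
  assert (Hc2 : S <= eps/2 + 2 * (A * INR m) * (Y2 + V2)).
  { apply Rle_trans with (eps/2 + 4 * A * (sqrt Y2 * sqrt V2) * INR m); [lra|].
    assert (4 * A * (sqrt Y2 * sqrt V2) * INR m <= 4 * (A * INR m) * ((Y2 + V2)/2)).
    { replace (4 * A * (sqrt Y2 * sqrt V2) * INR m) with (4 * (A * INR m) * (sqrt Y2 * sqrt V2)) by ring.
      apply Rmult_le_compat_l; lra. }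
    lra. }
  assert (Heq : Y2 + V2 = (2 + 2*((b+1)/b)) * S + (b+1) * T^2) by (unfold Y2, V2; field; unfold b; lra).
  rewrite Heq in Hc2. fold b A in Hsmall.
  assert (2 * (A * INR m) * ((2 + 2*((b+1)/b)) * S) <= S/2).
  { replace (2 * (A * INR m) * ((2 + 2*((b+1)/b)) * S)) with ((2 * A * INR m * (2 + 2*((b+1)/b))) * S) by ring.
    apply Rle_trans with (1/2 * S); [apply Rmult_le_compat_r; lra| lra]. }
  lra.
Qed.

Definition dlt N m := 3 / (64 * INR m * nn N ^ 2).

Lemma params N m p : (3 <= N)%nat -> (1 <= m)%nat -> pS N - dlt N m <= p < pS N ->
  1 < p /\ 0 <= aA N p /\ 32 * aA N p * INR m <= 1/2 /\
  nn N ^ 2 / 6 <= bb N p <= nn N ^ 2 / 4 /\ 0 < kk p <= 2 * nn N / 3 /\ p + 1 <= 6 /\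
  3 / nn N <= p - 1 /\ 1 <= nn N.
Proof.
  intros HN Hm Hp.
  assert (Hn : 1 <= nn N) by (unfold nn; apply le_INR in HN; simpl in HN; lra).
  assert (HM : 1 <= INR m) by (apply le_INR in Hm; simpl in Hm; lra).
  set (n := nn N) in *.
  assert (HpS : pS N = (n + 4)/n) by (unfold pS, n, nn; f_equal; ring).
  rewrite HpS in Hp. unfold dlt in Hp. fold n in Hp.
  assert (Hd : 3 / (64 * INR m * n^2) <= 1/n).
  { apply Rmult_le_reg_l with (64 * INR m * n^2); [nra|].
    field_simplify; [|nra|nra]. nra. }
  set (d := 3 / (64 * INR m * n^2)) in *.
  assert (Hd0 : 0 < d) by (unfold d; apply Rdiv_lt_0_compat; nra).
  assert (Hp1 : 3 / n <= p - 1).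
  { replace (3/n) with ((n+4)/n - 1/n - 1) by (field; lra). lra. }
  assert (Hp2 : p - 1 < 4 / n).
  { replace (4/n) with ((n+4)/n - 1) by (field; lra). lra. }
  assert (H3n : 0 < 3 / n) by (apply Rdiv_lt_0_compat; lra).
  assert (Hpn1 : 3 <= (p-1) * n) by (apply Rmult_le_reg_r with (/n); [apply Rinv_0_lt_compat; lra|];
     replace ((p-1)*n*/n) with (p-1) by (field; lra); exact Hp1).
  assert (Hpn2 : (p-1) * n < 4) by (apply Rmult_lt_reg_r with (/n); [apply Rinv_0_lt_compat; lra|];
     replace ((p-1)*n*/n) with (p-1) by (field; lra); exact Hp2).
  assert (Hk : kk p * (p-1) = 2) by (unfold kk; field; lra).
  assert (Hkpos : 0 < kk p) by (unfold kk; apply Rdiv_lt_0_compat; lra).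
  assert (Hk1 : n/2 < kk p).
  { apply Rmult_lt_reg_r with (2*(p-1)); [lra|]. nra. }
  assert (Hk2 : kk p <= 2 * n / 3).
  { apply Rmult_le_reg_r with (3*(p-1)); [lra|]. nra. }
  assert (HA : aA N p <= d * n^2 / 3).
  { unfold aA. fold n.
    assert (Hpd : (n+4)/n - p <= d) by lra.
    assert (Hq : (n+4)/n - p = (4 - (p-1)*n)/n) by (field; lra).
    rewrite Hq in Hpd.
    assert (Hq2 : 4 - (p-1)*n <= d * n) by (apply Rmult_le_reg_r with (/n); [apply Rinv_0_lt_compat; lra|];
      replace ((4 - (p-1)*n) */n) with ((4 - (p-1)*n)/n) by (field; lra);
      replace (d*n*/n) with d by (field; lra); exact Hpd).
    assert (Hq3 : 2 * kk p - n = (4 - (p-1)*n) / (p-1)) by (unfold kk; field; lra).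
    rewrite Hq3. apply Rmult_le_reg_r with (p-1); [lra|].
    replace ((4 - (p-1)*n) / (p-1) * (p-1)) with (4 - (p-1)*n) by (field; lra).
    assert (0 <= d * n) by nra. nra. }
  repeat split; try lra.
  - unfold aA; fold n; lra.
  - apply Rle_trans with (32 * (d * n^2/3) * INR m); [apply Rmult_le_compat_r; lra|].
    unfold d. field_simplify; try nra.
  - unfold bb; fold n. nra.
  - unfold bb; fold n. nra.
  - apply Rle_trans with (2 + 4/n); [lra|]. assert (4/n <= 4) by (apply Rmult_le_reg_r with n; [lra|];
       replace (4/n*n) with 4 by (field; lra); nra). lra.
Qed.

Theorem lemma3p10 :
  forall (N m : nat), (3 <= N)%nat -> (1 <= m)%nat ->
  exists C delta : R, 0 < C /\ 0 < delta /\
    forall p : R, pS N - delta <= p < pS N ->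
    forall u : R -> R, is_u_m_p N p m u ->
    forall r : R, 0 < r < 1 ->
    forall du : R, derivable_pt_lim u r du ->
      Rabs du <= C / Rpower r ((p + 1) / (p - 1)).
Proof.
  intros N m HN Hm.
  set (n := nn N).
  assert (Hn : 1 <= n) by (unfold n, nn; apply le_INR in HN; simpl in HN; lra).
  set (B1 := 3 * n^2 / 2).
  set (T := Rpower B1 (n/3)).
  set (Sst := (n^2/4 + 1) * T^2 / 4).
  set (V2m := 12 * Sst / n^2 + T^2).
  set (Y2m := 2 * Sst + n^2/4 * V2m).
  set (C := (1 + Y2m) + 2 * n / 3 * (1 + V2m)).
  assert (HB1 : 1 <= B1) by (unfold B1; nra).
  assert (HT : 1 <= T) by (unfold T; rewrite <- (Rpower_O B1) by lra; apply Rle_Rpower; lra).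
  assert (HSst : 0 <= Sst) by (unfold Sst; pose proof (pow2_ge_0 T); nra).
  assert (HV2m : 0 <= V2m) by (unfold V2m; pose proof (pow2_ge_0 T);
     assert (0 <= 12 * Sst / n^2) by (unfold Rdiv; apply Rmult_le_pos; [lra|left; apply Rinv_0_lt_compat; nra]); lra).
  assert (HY2m : 0 <= Y2m) by (unfold Y2m; nra).
  exists C, (dlt N m). split; [unfold C; nra|]. split.
  { unfold dlt. apply Rdiv_lt_0_compat; [lra|]. fold n. apply le_INR in Hm. simpl in Hm. nra. }
  intros p Hp u [[u1 [u2 [Du [Cu1 [H10 [Du1 [Hode _]]]]]]] [[zs [Hlen [_ [_ Hzs]]]] _]] r Hr du Hdu.
  destruct (params N m p HN Hm Hp) as [Hp1 [HA [Hsm [[Hb1 Hb2] [[Hk0 Hk] [Hp6 [Hp3 _]]]]]]].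
  fold n in Hb1, Hb2, Hk, Hp3.
  assert (HG : Good N p u u1 u2).
  { split; [lra|split; [lra|split; [nra|split; [|split]]]].
    - intros; apply Du; lra.
    - intros; apply Du1; lra.
    - intros; apply Hode; lra. }
  assert (Cu : continuity_pt u 0) by (eapply dpl_cont; apply Du; lra).
  assert (Cu10 : continuity_pt u1 0) by (apply Cu1; lra).
  set (b := bb N p) in *. set (A := aA N p) in *.
  assert (Hbpos : 0 < b) by nra.
  assert (HTp : (p+1) * b <= Rpower T (p-1)).
  { apply Rle_trans with B1.
    - unfold B1. assert (0 <= p + 1) by lra. nra.
    - apply Rle_trans with (Rpower T (3/n)).
      + unfold T. rewrite Rpower_mult. replace (n/3*(3/n)) with 1 by (field; lra). rewrite Rpower_1; lra.
      + apply Rle_Rpower; lra. }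
  assert (Hsmall : 2 * A * INR m * (2 + 2*((b + 1)/b)) <= 1/2).
  { assert (Hq : (b+1)/b <= 7).
    { apply Rmult_le_reg_r with b; [lra|]. replace ((b+1)/b*b) with (b+1) by (field; lra). nra. }
    assert (0 <= A * INR m) by (apply Rmult_le_pos; [lra|apply pos_INR]).
    apply Rle_trans with (2 * (A * INR m) * 16); [|lra].
    replace (2 * A * INR m * (2 + 2 * ((b + 1) / b))) with (2 * (A * INR m) * (2 + 2 * ((b + 1) / b))) by ring.
    apply Rmult_le_compat_l; lra. }
  pose proof (S_bound N p u u1 u2 m zs T r HG Cu Cu10 H10 Hr HT HTp Hlen Hm
    ltac:(intros x Hx Hux; apply Hzs; auto) Hsmall) as HS.
  fold b A in HS.
  set (S := HH N p u u1 r) in *.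
  assert (HS0 : 0 <= S) by (eapply H_nonneg; eauto).
  assert (HSS : S <= Sst).
  { apply Rle_trans with (4 * A * INR m * (b + 1) * T ^ 2); auto.
    assert (Hq : 1 <= (b+1)/b) by (apply Rmult_le_reg_r with b; [lra|];
       replace ((b+1)/b*b) with (b+1) by (field; lra); nra).
    assert (HAm : 4 * A * INR m <= 1/4).
    { assert (0 <= A * INR m) by (apply Rmult_le_pos; [lra|apply pos_INR]). nra. }
    unfold Sst. pose proof (pow2_ge_0 T). assert (0 <= (b+1) * T^2) by nra. nra. }
  assert (Hv : vv p u r ^ 2 <= V2m).
  { apply Rle_trans with (2 * S / b + T^2).
    - apply (v_bound N p (vv p u r) (yy p u u1 r) S T); auto; try lra. unfold S, HH. fold b. lra.
    - unfold V2m. apply Rplus_le_compat_r. unfold Rdiv.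
      apply Rle_trans with (2 * Sst * / b). apply Rmult_le_compat_r; [left; apply Rinv_0_lt_compat; lra|lra].
      apply Rle_trans with (2 * Sst * (6 / n^2)).
      + apply Rmult_le_compat_l; [lra|]. replace (6/n^2) with (/ (n^2/6)) by (field; lra).
        apply Rinv_le_contravar; nra.
      + right. field. lra. }
  assert (Hy : yy p u u1 r ^ 2 <= Y2m).
  { pose proof (FF_nonneg p (vv p u r) Hp1). unfold S, HH in HSS. fold b in HSS.
    unfold Y2m. assert (b * vv p u r ^ 2 <= n^2/4 * V2m) by (apply Rmult_le_compat; try lra; apply pow2_ge_0).
    lra. }
  assert (Hdu1 : du = u1 r) by (eapply uniqueness_limite; [exact Hdu| apply Du; lra]).
  subst du.
  assert (Hexp : (p+1)/(p-1) = kk p + 1) by (unfold kk; field; lra).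
  rewrite Hexp, Rpower_k1 by lra.
  pose proof (Rpower_pos r (kk p)) as HP.
  assert (Heq : Rpower r (kk p) * r * u1 r = yy p u u1 r - kk p * vv p u r).
  { unfold yy, vv. rewrite Rpower_k1 by lra. ring. }
  assert (Hb : Rabs (Rpower r (kk p) * r * u1 r) <= C).
  { rewrite Heq. eapply Rle_trans; [apply Rabs_triang|]. rewrite Rabs_Ropp, Rabs_mult, (Rabs_right (kk p)) by lra.
    assert (Rabs (yy p u u1 r) <= 1 + Y2m).
    { pose proof (Rabs_pos (yy p u u1 r)). pose proof (pow2_abs (yy p u u1 r)). nra. }
    assert (Rabs (vv p u r) <= 1 + V2m).
    { pose proof (Rabs_pos (vv p u r)). pose proof (pow2_abs (vv p u r)). nra. }
    unfold C. pose proof (Rabs_pos (vv p u r)). nra. }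
  rewrite !Rabs_mult, (Rabs_right (Rpower r (kk p))), (Rabs_right r) in Hb by lra.
  apply Rmult_le_reg_l with (Rpower r (kk p) * r); [nra|].
  replace (Rpower r (kk p) * r * (C / (Rpower r (kk p) * r))) with C by (field; lra).
  lra.
Qed.
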